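(* Let $X_\sigma$ be the root monoid associated with a cone $\sigma$, a $k$-dimensional regular face $\tau$ with primitive ray generators $p_1,\ldots,p_k$, and a compatible set of Demazure roots $\{e_1^{(r)},e_2^{(r)}\}_{r=1}^k$. Then the set of idempotents of $X_\sigma$ is invariant under each one-parameter subgroup $R_{p_i}$, $i=1,\ldots,k$; in particular it is invariant under $R_\tau=\langle R_{p_1},\ldots,R_{p_k}\rangle$.
   Context: $\mathbb{K}$ algebraically closed of characteristic zero; $N$ lattice, $M$ dual, $S_\sigma=\sigma^\vee\cap M$, $X_\sigma=\operatorname{Spec}\bigoplus_{u\in S_\sigma}\mathbb{K}\chi^u$ with torus $\mathbb{T}=\operatorname{Hom}(M,\mathbb{K}^\times)$. Regular face: primitive ray generators extend to a basis of $N$. A Demazure root for ray generator $p_i$ of $\sigma$: $e\in M$ with $\langle p_i,e\rangle=-1$ and $\langle p_j,e\rangle\ge0$ for other ray generators. Compatibility with $\tau$: $\langle p_s,e_1^{(r)}\rangle=\langle p_s,e_2^{(r)}\rangle=-\delta_{rs}$. Root monoid multiplication: $\chi^u(x*y)=\sum_{\bar i+\bar j=\langle\bar p,u\rangle}\prod_r\binom{\langle p_r,u\rangle}{i_r}\chi^{u+\sum_ri_re_2^{(r)}}(x)\chi^{u+\sum_rj_re_1^{(r)}}(y)$, $\langle\bar p,u\rangle=(\langle p_1,u\rangle,\ldots,\langle p_k,u\rangle)$. An idempotent is $x$ with $x*x=x$. For $p\in N$, $R_p$ is the one-parameter subgroup of $\mathbb{T}$ with $\chi^u(R_p(s)x)=s^{\langle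 p,u\rangle}\chi^u(x)$. *)

(* Defs.v *)
From HB Require Import structures.
From mathcomp Require Import all_boot all_order all_algebra.
Set Implicit Arguments. Unset Strict Implicit. Unset Printing Implicit Defensive.
Import Order.TTheory GRing.Theory Num.Theory.
Local Open Scope ring_scope.

(* Lattice N = Z^n, dual M = Z^n, both as row vectors 'rV[int]_n. *)
Definition pair n (p u : 'rV[int]_n) : int := \sum_(j < n) p ord0 j * u ord0 j.

Definition in_cone n (P : seq 'rV[int]_n) (v : 'rV[int]_n) : Prop :=
  exists c : 'rV[int]_n -> rat, (forall w, 0 <= c w) /\
    map_mx intr v = \sum_(w <- P) c w *: map_mx intr w.

Definition primitive n (v : 'rV[int]_n) : Prop :=
  forall d : nat, (forall j, (d%:Z %| v ord0 j)%Z) -> d = 1%N.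

(* P is the list of primitive ray generators of a strongly convex rational
   polyhedral cone sigma = cone(P). *)
Definition ray_generators n (P : seq 'rV[int]_n) : Prop :=
  [/\ uniq P,
      forall v, v \in P -> primitive v,
      forall v, v \in P -> ~ in_cone (rem v P) v &
      forall c : 'rV[int]_n -> rat, (forall w, 0 <= c w) ->
        \sum_(w <- P) c w *: map_mx intr w = 0 :> 'rV[rat]_n ->
        forall w, w \in P -> c w = 0].

Definition inS n (P : seq 'rV[int]_n) (u : 'rV[int]_n) : Prop :=
  forall w, w \in P -> 0 <= pair w u.

(* p_1..p_k are exactly the primitive ray generators of a face tau of sigma *)
Definition face_rays n k (P : seq 'rV[int]_n) (p : 'I_k -> 'rV[int]_n) : Prop :=
  (forall r, p r \in P) /\ injective p /\
  exists m : 'rV[int]_n, inS P m /\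
    forall v, v \in P -> (pair v m = 0 <-> exists r, v = p r).

Definition regular_rays n k (p : 'I_k -> 'rV[int]_n) : Prop :=
  exists (B : 'M[int]_n) (f : 'I_k -> 'I_n),
    injective f /\ B \in unitmx /\ forall r, row (f r) B = p r.

Definition demazure_root n (P : seq 'rV[int]_n) (v e : 'rV[int]_n) : Prop :=
  pair v e = -1 /\ forall w, w \in P -> w != v -> 0 <= pair w e.

Definition compatible n k (p e1 e2 : 'I_k -> 'rV[int]_n) : Prop :=
  forall r s, pair (p s) (e1 r) = - ((r == s)%:R) /\
              pair (p s) (e2 r) = - ((r == s)%:R).

(* K-points of X_sigma = Spec K[S_sigma]: monoid homs S_sigma -> (K, mult),
   x u = chi^u(x) (values outside S_sigma are irrelevant). *)
Definition is_point (K : fieldType) n (P : seq 'rV[int]_n) (x : 'rV[int]_n -> K) : Prop :=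
  x 0 = 1 /\ forall u v, inS P u -> inS P v -> x (u + v) = x u * x v.

Definition dd n k (p : 'I_k -> 'rV[int]_n) (u : 'rV[int]_n) (r : 'I_k) : nat :=
  `|pair (p r) u|%N.

Definition DD n k (p : 'I_k -> 'rV[int]_n) (u : 'rV[int]_n) : nat :=
  \max_(r < k) dd p u r.

(* chi^u(x * y) in the root monoid *)
Definition rmul (K : fieldType) n k (p e1 e2 : 'I_k -> 'rV[int]_n)
    (x y : 'rV[int]_n -> K) (u : 'rV[int]_n) : K :=
  \sum_(i : {ffun 'I_k -> 'I_(DD p u).+1} | [forall r, (i r <= dd p u r)%N])
    (\prod_(r < k) ('C(dd p u r, i r))%:R) *
    x (u + \sum_(r < k) (e2 r *+ i r)) *
    y (u + \sum_(r < k) (e1 r *+ (dd p u r - i r))).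

Definition rm_idempotent (K : fieldType) n k (P : seq 'rV[int]_n)
    (p e1 e2 : 'I_k -> 'rV[int]_n) (x : 'rV[int]_n -> K) : Prop :=
  is_point P x /\ forall u, inS P u -> rmul p e1 e2 x x u = x u.

Definition Ract (K : fieldType) n (q : 'rV[int]_n) (s : K) (x : 'rV[int]_n -> K)
  : 'rV[int]_n -> K := fun u => s ^ (pair q u) * x u.

(* Main.v *)
Require Import Defs.
From HB Require Import structures.
From mathcomp Require Import all_boot all_order all_algebra.
From mathcomp Require Import ring.
Import Order.TTheory GRing.Theory Num.Theory.
Local Open Scope ring_scope.

Lemma pairD n (q a b : 'rV[int]_n) : pair q (a + b) = pair q a + pair q b.
Proof. by rewrite /pair -big_split; apply: eq_bigr => j _; rewrite !mxE mulrDr. Qed.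

Lemma pair0 n (q : 'rV[int]_n) : pair q 0 = 0.
Proof. by rewrite /pair big1 // => j _; rewrite mxE mulr0. Qed.

Lemma gen_idem (K : fieldType) n k (P : seq 'rV[int]_n) (p e1 e2 : 'I_k -> 'rV[int]_n)
  (x c : 'rV[int]_n -> K) (t : 'I_k -> K) :
  c 0 = 1 -> (forall a b, c (a + b) = c a * c b) ->
  (forall r, c (e1 r) = t r) -> (forall r, c (e2 r) = t r) ->
  (forall u, inS P u -> c u * \prod_(r < k) t r ^+ dd p u r = 1) ->
  rm_idempotent P p e1 e2 x -> rm_idempotent P p e1 e2 (fun u => c u * x u).
Proof.
move=> c0 cD ce1 ce2 cu [[x0 xD] xi]; split; [split|].
- by rewrite c0 x0 mulr1.
- by move=> u v Su Sv; rewrite cD xD // mulrACA.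
move=> u Su.
have cS : forall F : 'I_k -> 'rV[int]_n, c (\sum_(r < k) F r) = \prod_(r < k) c (F r).
  by move=> F; apply: (big_morph c cD c0).
have cM : forall a m, c (a *+ m) = c a ^+ m.
  by move=> a; elim=> [|m IH]; rewrite ?mulr0n ?expr0 // mulrS exprS cD IH.
rewrite /rmul -(xi u Su) mulr_sumr; apply: eq_bigr => i /forallP Hi.
rewrite !cD !cS.
have E : (\prod_(r < k) c (e2 r *+ i r)) * (\prod_(r < k) c (e1 r *+ (dd p u r - i r)))
   = \prod_(r < k) t r ^+ dd p u r.
  rewrite -big_split; apply: eq_bigr => r _.
  by rewrite /= !cM ce1 ce2 -exprD subnKC // Hi.
move: (cu u Su); rewrite -E.
move: (c u) (\prod_(r < k) c (e2 r *+ i r)) (\prod_(r < k) c (e1 r *+ (dd p u r - i r))) => C0 A B H.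
move: (\prod_(r < k) 'C(dd p u r, i r)%:R) (x (u + \sum_(r < k) e2 r *+ i r)) (x (u + \sum_(r < k) e1 r *+ (dd p u r - i r))) => C1 X Y.
transitivity (C1 * X * Y * C0 * (C0 * (A * B))); first by ring.
by rewrite H mulr1 mulrC.
Qed.

Lemma pairMn n (q a : 'rV[int]_n) m : pair q (a *+ m) = pair q a *+ m.
Proof. by elim: m => [|m IH]; rewrite ?mulr0n ?pair0 // mulrS pairD IH mulrS. Qed.

Lemma pair_dd n k (P : seq 'rV[int]_n) (p : 'I_k -> 'rV[int]_n) u j :
  p j \in P -> inS P u -> pair (p j) u = (dd p u j)%:Z.
Proof. by move=> Pj Su; rewrite /dd gez0_abs //; apply: Su. Qed.

Lemma cchar (K : fieldType) n k (p e : 'I_k -> 'rV[int]_n) (s : K) j r :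
  s != 0 -> pair (p j) (e r) = - ((r == j)%:R) ->
  s ^ pair (p j) (e r) = if r == j then s^-1 else 1.
Proof. by move=> s0 ->; case: (r == j); rewrite ?exprN1 // oppr0 expr0z. Qed.

Theorem mainTheorem8 (K : closedFieldType) (n k : nat)
    (P : seq 'rV[int]_n) (p e1 e2 : 'I_k -> 'rV[int]_n) :
  [pchar K] =i pred0 ->
  ray_generators P ->
  face_rays P p ->
  regular_rays p ->
  (forall r, demazure_root P (p r) (e1 r) /\ demazure_root P (p r) (e2 r)) ->
  compatible p e1 e2 ->
  forall x : 'rV[int]_n -> K, rm_idempotent P p e1 e2 x ->
    (forall (i : 'I_k) (s : K), s != 0 ->
       rm_idempotent P p e1 e2 (Ract (p i) s x)) /\
    (forall s : 'I_k -> K, (forall r, s r != 0) ->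
       rm_idempotent P p e1 e2 (fun u => (\prod_(r < k) s r ^ pair (p r) u) * x u)).
Proof.
move=> _ _ [pP _] _ _ cmp x xi; split.
- move=> j s s0.
  apply: (@gen_idem _ _ _ P p e1 e2 x _ (fun r => if r == j then s^-1 else 1)) xi.
  + by rewrite pair0 expr0z.
  + by move=> a b; rewrite pairD expfzDr.
  + by move=> r; apply: cchar => //; case: (cmp r j).
  + by move=> r; apply: cchar => //; case: (cmp r j).
  move=> u Su; rewrite (bigD1 j) //= eqxx big1 => [|r /negbTE -> ]; last by rewrite expr1n.
  by rewrite mulr1 (@pair_dd _ _ _ _ _ _ (pP _) Su) -exprMn divff // expr1n.
- move=> s s0.
  apply: (@gen_idem _ _ _ P p e1 e2 x _ (fun r => (s r)^-1)) xi.
  + by rewrite big1 // => r _; rewrite pair0 expr0z.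
  + by move=> a b; rewrite -big_split; apply: eq_bigr => r _; rewrite pairD expfzDr.
  + move=> r; rewrite (bigD1 r) //= cchar //; last by case: (cmp r r).
    rewrite eqxx big1 ?mulr1 // => r' Hr.
    rewrite cchar //; last by case: (cmp r r').
    by rewrite eq_sym (negbTE Hr).
  + move=> r; rewrite (bigD1 r) //= cchar //; last by case: (cmp r r).
    rewrite eqxx big1 ?mulr1 // => r' Hr.
    rewrite cchar //; last by case: (cmp r r').
    by rewrite eq_sym (negbTE Hr).
  move=> u Su; rewrite -big_split big1 // => r _ /=.
  by rewrite (@pair_dd _ _ _ _ _ _ (pP _) Su) -exprMn divff // expr1n.
Qed.
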